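(* Let $k\ge2$ and $n\ge0$. The map $\phi:\mathcal{T}^k_n\to\overline{\mathcal{Q}}^k_n$ defined below is a well-defined bijection from compartmented trees with $n$ edges onto $k$-quasi-Stirling permutations of size $n$. For a non-root vertex $c$ of $T\in\mathcal{T}^k_n$ whose edge to its parent has label $\ell$, define recursively the word $W(c)=\ell\,U_1\,\ell\,U_2\,\ell\cdots\ell\,U_{k-1}\,\ell$, where $U_j$ is the concatenation of $W(c')$ over the children $c'$ of $c$ in its $j$-th compartment, from left to right (so $\ell$ occurs exactly $k$ times in $W(c)$ outside the $U_j$). Then $\phi(T)$ is the concatenation of $W(c)$ over the children $c$ of the root, from left to right. (Equivalently: label each half-edge at a non-root vertex $v$ with the label of the edge from $v$ to its parent, traverse edges and half-edges by a left-to-right depth-first walk, recording edge labels each time an edge is traversed and half-edge labels once.)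
   Context: For $k\ge2$, a compartmented tree with $n$ edges is a plane (ordered) rooted tree with $n$ edges labeled bijectively by $\{1,\dots,n\}$, in which every vertex other than the root has $k-2$ unlabeled half-edges serving as walls that separate its children into $k-1$ ordered, possibly empty, compartments (the root has no half-edges; its children form a single ordered list). $\mathcal{T}^k_n$ denotes the set of such trees. A $k$-quasi-Stirling permutation of size $n$ is a permutation $\pi$ of the multiset $\{1^k,\dots,n^k\}$ (each of $1,\dots,n$ appearing $k$ times) with no indices $i<j<m<\ell$ such that $\pi_i=\pi_m\neq\pi_j=\pi_\ell$; $\overline{\mathcal{Q}}^k_n$ is their set. *)

(* Defs.v *)
From mathcomp Require Import all_boot.
Set Implicit Arguments. Unset Strict Implicit. Unset Printing Implicit Defensive.

(* A (sub)tree hanging below a non-root vertex c: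
   [CNode l cs] where l is the label of the edge from c to its parent and
   cs is the ordered list of compartments of c (each compartment an ordered
   list of child subtrees).  The k-2 walls of c are implicit: they separate
   consecutive compartments, so c must have exactly k-1 compartments. *)
Inductive ctree : Type := CNode : nat -> seq (seq ctree) -> ctree.

Fixpoint ct_wf (k : nat) (t : ctree) : bool :=
  let: CNode _ cs := t in (size cs == k.-1) && all (all (ct_wf k)) cs.

Fixpoint ct_labels (t : ctree) : seq nat :=
  let: CNode l cs := t in l :: flatten (map (fun c => flatten (map ct_labels c)) cs).

(* A compartmented tree is given by the ordered list of root children
   (the root has no walls).  Membership in T^k_n: *)
Definition is_ctree (k n : nat) (F : seq ctree) : Prop :=
  all (ct_wf k) F /\ perm_eq (flatten (map ct_labels F)) (iota 1 n).

Fixpoint W (t : ctree) : seq nat :=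
  let: CNode l cs := t in
  l :: flatten (map (fun c => flatten (map W c) ++ [:: l]) cs).

Definition phi (F : seq ctree) : seq nat := flatten (map W F).

Definition is_qstirling (k n : nat) (w : seq nat) : Prop :=
  perm_eq w (flatten [seq nseq k i | i <- iota 1 n]) /\
  ~ (exists i j m l, [/\ i < j, j < m, m < l & l < size w] /\
       nth 0 w i = nth 0 w m /\ nth 0 w j = nth 0 w l /\ nth 0 w i <> nth 0 w j).

(* Main.v *)
Require Import Defs.
From mathcomp Require Import all_boot.
From mathcomp Require Import zify.

Definition abab_free (w : seq nat) : Prop :=
  forall x y, x != y -> ~~ subseq [:: x; y; x; y] w.

Lemma subseq_cat_split (s t1 t2 : seq nat) :
  subseq s (t1 ++ t2) -> exists n, subseq (take n s) t1 /\ subseq (drop n s) t2.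
Proof.
elim: t1 s => [|y t1 IH] s /=.
  by move=> h; exists 0; rewrite take0 drop0.
case: s => [|x s]; first by move=> _; exists 0; rewrite /= !sub0seq.
rewrite /=; case: eqP => [<-|nxy] h.
  have [n [h1 h2]] := IH _ h.
  by exists n.+1; rewrite /= eqxx.
have [n [h1 h2]] := IH _ h.
exists n; split=> //.
exact: subseq_trans h1 (subseq_cons _ _).
Qed.

Lemma abab_sub u w : subseq u w -> abab_free w -> abab_free u.
Proof.
move=> su h x y nxy; apply/negP => s; move: (h x y nxy) => /negP; apply.
exact: subseq_trans s su.
Qed.

Lemma abab_cat u v : abab_free u -> abab_free v ->
  (forall x, x \in u -> x \notin v) -> abab_free (u ++ v).
Proof.
move=> hu hv d x y nxy; apply/negP => /subseq_cat_split [n [h1 h2]].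
case: n h1 h2 => [|[|[|[|n]]]] /= h1 h2.
- by move: (hv x y nxy); rewrite h2.
- have xu : x \in u by rewrite -sub1seq.
  have xv : x \in v by apply: (mem_subseq h2); rewrite !inE eqxx orbT.
  by move: (d x xu); rewrite xv.
- have xu : x \in u by apply: (mem_subseq h1); rewrite !inE eqxx.
  have xv : x \in v by apply: (mem_subseq h2); rewrite !inE eqxx.
  by move: (d x xu); rewrite xv.
- have yu : y \in u by apply: (mem_subseq h1); rewrite !inE eqxx orbT.
  have yv : y \in v by rewrite -sub1seq.
  by move: (d y yu); rewrite yv.
- by move: (hu x y nxy); rewrite h1.
Qed.

Fixpoint pdisj (ps : seq (seq nat)) : bool :=
  if ps is p :: ps' then ~~ has (fun x => x \in flatten ps') p && pdisj ps' else true.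

Lemma abab_flatten gs : pdisj gs -> (forall g, g \in gs -> abab_free g) ->
  abab_free (flatten gs).
Proof.
elim: gs => [|g gs IH] /=; first by move=> _ _ x y _; case: (subseq _ _) (sub0seq [:: x; y; x; y]) => //; rewrite /= => ->.
case/andP=> d pd h; apply: abab_cat.
- by apply: h; rewrite inE eqxx.
- by apply: IH => // g' g'in; apply: h; rewrite inE g'in orbT.
- by move=> x xg; apply/negP => xf; move/negP: d; apply; apply/hasP; exists x.
Qed.

Fixpoint gapw (a : nat) (gs : seq (seq nat)) : seq nat :=
  if gs is g :: gs' then g ++ a :: gapw a gs' else [::].

Lemma mem_gapw (a : nat) (gs : seq (seq nat)) x : x != a -> (x \in gapw a gs) = (x \in flatten gs).
Proof.
move=> nxa; elim: gs => [|g gs IH] //=.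
by rewrite !mem_cat inE IH (negbTE nxa).
Qed.

Lemma filter_gapw (a : nat) (gs : seq (seq nat)) : (forall g, g \in gs -> a \notin g) ->
  filter (predC1 a) (gapw a gs) = flatten gs.
Proof.
elim: gs => [|g gs IH] //= h.
rewrite !filter_cat /= IH; last by move=> g' g'in; apply: h; rewrite inE g'in orbT.
rewrite /= eqxx; congr (_ ++ _).
apply/all_filterP/allP => x xg /=; apply/eqP => exa.
by move: (h g (mem_head _ _)); rewrite -exa xg.
Qed.

Lemma count_gapw (a : nat) (gs : seq (seq nat)) (p : pred nat) :
  count p (gapw a gs) = count p (flatten gs) + size gs * p a.
Proof.
elim: gs => [|g gs IH] //=.
rewrite !count_cat /= IH. lia.
Qed.

Lemma noyay (a : nat) (gs : seq (seq nat)) y : y != a -> (forall g, g \in gs -> a \notin g) -> pdisj gs ->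
  ~~ subseq [:: y; a; y] (gapw a gs).
Proof.
move=> nya; elim: gs => [|g gs IH] h pd /=.
  by [].
move: pd => /= /andP [d pd].
have hg : a \notin g by apply: h; rewrite mem_head.
have IH' : ~~ subseq [:: y; a; y] (gapw a gs).
  by apply: IH => // g' g'in; apply: h; rewrite inE g'in orbT.
apply/negP => /subseq_cat_split [n [h1 h2]].
have dy : y \in g -> y \in gapw a gs -> False.
  move=> yg yG; move/negP: d; apply; apply/hasP; exists y => //.
  by rewrite -(@mem_gapw a gs y nya).
case: n h1 h2 => [|[|[|[|n]]]] /= h1 h2.
- by move: h2; rewrite (negbTE nya) => h2; move/negP: IH'; apply.
- move: h2; rewrite eqxx sub1seq => h2; apply: dy h2; by rewrite -sub1seq.
- move: h2; rewrite (negbTE nya) sub1seq => h2; apply: dy h2.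
  by apply: (mem_subseq h1); rewrite mem_head.
- by move/negP: hg; apply; apply: (mem_subseq h1); rewrite !inE eqxx orbT.
- by move/negP: hg; apply; apply: (mem_subseq h1); rewrite !inE eqxx orbT.
Qed.

Lemma abab_gapw (a : nat) (gs : seq (seq nat)) : (forall g, g \in gs -> a \notin g) -> pdisj gs ->
  (forall g, g \in gs -> abab_free g) -> abab_free (a :: gapw a gs).
Proof.
move=> h pd hf x y nxy; apply/negP => s.
case: (eqVneq x a) => [exa|nxa].
  subst x; move: s; rewrite /= eqxx => s.
  have nya : y != a by rewrite eq_sym.
  by move/negP: (@noyay a gs y nya h pd); apply.
case: (eqVneq y a) => [eya|nya].
  subst y; move: s; rewrite /= (negbTE nxa) => s.
  move/negP: (@noyay a gs x nxa h pd); apply.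
  apply: subseq_trans s; exact: (prefix_subseq [:: x; a; x] [:: a]).
have : subseq [:: x; y; x; y] (filter (predC1 a) (a :: gapw a gs)).
  by rewrite subseq_filter s /= nxa nya.
rewrite /= eqxx /= filter_gapw //.
by apply/negP; apply: abab_flatten.
Qed.
Set Implicit Arguments. Unset Strict Implicit. Unset Printing Implicit Defensive.

Fixpoint AllP (A : Type) (P : A -> Prop) (s : seq A) : Prop :=
  if s is x :: s' then P x /\ AllP P s' else True.

Section Ind.
Variable P : ctree -> Prop.
Hypothesis H : forall l cs, AllP (AllP P) cs -> P (CNode l cs).
Fixpoint ctree_ind' (t : ctree) : P t :=
  match t with
  | CNode l cs => H l
      ((fix f (cs : seq (seq ctree)) : AllP (AllP P) cs :=
          match cs return AllP (AllP P) cs with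
          | [::] => I
          | c :: cs' => conj
              ((fix g (c : seq ctree) : AllP P c :=
                 match c return AllP P c with
                 | [::] => I
                 | t :: c' => conj (ctree_ind' t) (g c')
                 end) c) (f cs')
          end) cs)
  end.
End Ind.

Lemma AllP_all (A : Type) (P : A -> Prop) s : (forall x, P x) -> AllP P s.
Proof. by move=> h; elim: s => //= x s ->; split. Qed.

Definition flabels (F : seq ctree) : seq nat := flatten (map ct_labels F).

Lemma Wnode l cs : W (CNode l cs) = l :: gapw l (map phi cs).
Proof. by rewrite /=; congr cons; elim: cs => //= c cs ->; rewrite -catA. Qed.

Lemma labnode l cs : ct_labels (CNode l cs) = l :: flatten (map flabels cs).
Proof. by []. Qed.

Lemma phi_cons t F : phi (t :: F) = W t ++ phi F.
Proof. by []. Qed.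

Lemma flabels_cons t F : flabels (t :: F) = ct_labels t ++ flabels F.
Proof. by []. Qed.

Lemma mem_phi_gen F : AllP (fun t => forall x, (x \in W t) = (x \in ct_labels t)) F ->
  forall x, (x \in phi F) = (x \in flabels F).
Proof.
elim: F => //= t F IH [ht hF] x.
by rewrite phi_cons flabels_cons !mem_cat ht IH.
Qed.

Lemma mem_W t x : (x \in W t) = (x \in ct_labels t).
Proof.
move: t x; apply: ctree_ind' => l cs IH x.
rewrite Wnode labnode !inE; case: eqP => //= /eqP nxl.
rewrite mem_gapw //.
elim: cs IH => //= c cs IHcs [hc hcs].
by rewrite !mem_cat IHcs // mem_phi_gen.
Qed.

Lemma mem_phi F x : (x \in phi F) = (x \in flabels F).
Proof. by apply: mem_phi_gen; apply: AllP_all => t y; apply: mem_W. Qed.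

Lemma mem_flat_phi (Fs : seq (seq ctree)) x :
  (x \in flatten (map phi Fs)) = (x \in flatten (map flabels Fs)).
Proof. by elim: Fs => //= F Fs IH; rewrite !mem_cat IH mem_phi. Qed.

Lemma pdisj_phi (Fs : seq (seq ctree)) : pdisj (map flabels Fs) = pdisj (map phi Fs).
Proof.
elim: Fs => //= F Fs ->; congr (~~ _ && _).
rewrite (@eq_has_r _ _ (phi F)); last by move=> x; rewrite mem_phi.
by apply: eq_has => x /=; rewrite mem_flat_phi.
Qed.

Lemma uniq_flatten (ls : seq (seq nat)) : uniq (flatten ls) = all uniq ls && pdisj ls.
Proof.
elim: ls => //= l ls IH.
rewrite cat_uniq IH has_sym.
by case: (uniq l); case: (all uniq ls); case: (pdisj ls); case: (has _ _).
Qed.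

Lemma count_W k (hk : 1 <= k) (p : pred nat) t :
  ct_wf k t -> count p (W t) = k * count p (ct_labels t).
Proof.
move: t; apply: ctree_ind' => l cs IH; rewrite Wnode labnode /= => /andP [/eqP sz wf].
rewrite count_gapw size_map sz.
have -> : count p (flatten [seq phi i | i <- cs]) =
          k * count p (flatten [seq flabels c | c <- cs]).
  elim: cs IH wf {sz} => [|c cs IHcs]; first by rewrite muln0.
  move=> /= [hc hcs] /andP [wc wcs].
  rewrite !count_cat IHcs // mulnDr; congr (_ + _); rewrite /flabels.
  elim: c hc wc {IHcs hcs wcs} => [|t c IHc]; first by rewrite muln0.
  move=> /= [ht hc] /andP [wt wc].
  by rewrite !count_cat ht // IHc // mulnDr.
clear IH wf; case: k hk sz => // k _ _ /=; set a := p l; set b := count _ _; rewrite mulnDr mulSn; set c := k * a; set d := k.+1 * b; lia.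
Qed.

Lemma count_phi k (hk : 1 <= k) (p : pred nat) F :
  all (ct_wf k) F -> count p (phi F) = k * count p (flabels F).
Proof.
elim: F => [|t F IH]; first by rewrite /= muln0.
move=> /= /andP [wt wF].
by rewrite phi_cons flabels_cons !count_cat (count_W hk) // IH // mulnDr.
Qed.

Lemma abab_nil : abab_free [::].
Proof. by move=> x y _. Qed.

Lemma abab_phi k F0 : all (ct_wf k) F0 -> uniq (flabels F0) -> abab_free (phi F0).
Proof.
pose P t := ct_wf k t -> uniq (ct_labels t) -> abab_free (W t).
have forest : forall F, AllP P F -> all (ct_wf k) F -> uniq (flabels F) -> abab_free (phi F).
  elim=> [|t F IH] /=; first by move=> *; apply: abab_nil.
  move=> [ht hF] /andP [wt wF]; rewrite phi_cons flabels_cons cat_uniq => /and3P [ut d uF].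
  apply: abab_cat; [exact: ht | exact: IH |].
  move=> x; rewrite mem_W mem_phi => xt; apply/negP => xF.
  by move/negP: d; apply; apply/hasP; exists x.
have tree : forall t, P t.
  apply: ctree_ind' => l cs IH; rewrite /P Wnode labnode /= => /andP [_ wf] /andP [nl u].
  move: u; rewrite uniq_flatten => /andP [ucs pd].
  have h1 : forall g, g \in map phi cs -> l \notin g.
    move=> g; elim: cs nl {IH wf ucs pd} => //= c cs IHc; rewrite mem_cat negb_or => /andP [n1 n2].
    rewrite inE => /orP [/eqP ->|]; first by rewrite mem_phi.
    exact: IHc.
  apply: abab_gapw => //; first by rewrite -pdisj_phi.
  elim: cs IH wf ucs {h1 nl pd} => //= c cs IHc [hc hcs] /andP [wc wcs] /andP [uc ucs] g.
  rewrite inE => /orP [/eqP ->|]; first exact: forest.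
  exact: IHc.
by apply: forest; apply: AllP_all.
Qed.

Lemma split_at (a : nat) u1 v1 u2 v2 : u1 ++ a :: v1 = u2 ++ a :: v2 ->
  a \notin u1 -> a \notin u2 -> u1 = u2 /\ v1 = v2.
Proof.
elim: u1 u2 => [|x u1 IH] [|y u2] //=.
- by move=> [->].
- by move=> [ea _] _; rewrite inE ea eqxx.
- by move=> [ea _]; rewrite inE ea eqxx.
- move=> [exy e]; rewrite !inE !negb_or => /andP [_ n1] /andP [_ n2].
  by have [-> ->] := IH _ e n1 n2; rewrite exy.
Qed.

Definition lab (t : ctree) := let: CNode l _ := t in l.

Lemma W_head t : exists s, W t = lab t :: s.
Proof. by case: t => l cs; rewrite Wnode; eexists. Qed.

Lemma lab_in t : lab t \in ct_labels t.
Proof. by case: t => l cs; rewrite labnode mem_head. Qed.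

Lemma inj_all : forall t1 t2 r1 r2, uniq (ct_labels t1) -> uniq (ct_labels t2) ->
  lab t1 \notin r1 -> lab t2 \notin r2 -> W t1 ++ r1 = W t2 ++ r2 -> t1 = t2 /\ r1 = r2.
Proof.
pose P t1 := forall t2 r1 r2, uniq (ct_labels t1) -> uniq (ct_labels t2) ->
  lab t1 \notin r1 -> lab t2 \notin r2 -> W t1 ++ r1 = W t2 ++ r2 -> t1 = t2 /\ r1 = r2.
have forest : forall F1, AllP P F1 -> forall F2, uniq (flabels F1) -> uniq (flabels F2) ->
    phi F1 = phi F2 -> F1 = F2.
  elim=> [|t1 F1 IH] /=.
    move=> _ [|t2 F2] //= _ _; rewrite phi_cons; have [s ->] := W_head t2; by [].
  move=> [h1 hF] [|t2 F2].
    by move=> _ _; rewrite phi_cons; have [s ->] := W_head t1.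
  rewrite !flabels_cons !cat_uniq => /and3P [u1 d1 uF1] /and3P [u2 d2 uF2].
  rewrite !phi_cons => e.
  have n1 : lab t1 \notin phi F1.
    rewrite mem_phi; apply/negP => hin; move/negP: d1; apply; apply/hasP.
    by exists (lab t1) => //; apply: lab_in.
  have n2 : lab t2 \notin phi F2.
    rewrite mem_phi; apply/negP => hin; move/negP: d2; apply; apply/hasP.
    by exists (lab t2) => //; apply: lab_in.
  have [-> e'] := h1 _ _ _ u1 u2 n1 n2 e.
  by rewrite (IH hF F2).
apply: ctree_ind' => l1 cs1 IH [l2 cs2] r1 r2.
rewrite /P !labnode !Wnode /= => /andP [nl1 u1] /andP [nl2 u2] n1 n2 [el e].
subst l2.
suff : cs1 = cs2 /\ r1 = r2 by case=> -> ->.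
elim: cs1 cs2 IH nl1 u1 nl2 u2 e => [|c1 cs1 IHc] [|c2 cs2] //=.
- move=> _ _ _ _ _ e; move: n1; rewrite e !mem_cat !inE eqxx !orbT /=.
  by [].
- move=> _ _ _ _ _ e; move: n2; rewrite -e !mem_cat !inE eqxx !orbT /=.
  by [].
move=> [hc hcs]; rewrite !mem_cat !negb_or => /andP [nc1 ncs1] u1 /andP [nc2 ncs2] u2.
rewrite -!catA /= => e.
move: u1 u2; rewrite !cat_uniq => /and3P [uc1 _ ucs1] /and3P [uc2 _ ucs2].
have m1 : l1 \notin phi c1 by rewrite mem_phi.
have m2 : l1 \notin phi c2 by rewrite mem_phi.
have [e1 e2] := split_at e m1 m2.
have := IHc cs2 hcs ncs1 ucs1 ncs2 ucs2 e2.
by case=> -> ->; rewrite (forest _ hc c2 uc1 uc2 e1).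
Qed.

Lemma phi_inj F1 F2 : uniq (flabels F1) -> uniq (flabels F2) -> phi F1 = phi F2 -> F1 = F2.
Proof.
elim: F1 F2 => [|t1 F1 IH] /=.
  move=> [|t2 F2] //= _ _; rewrite phi_cons; have [s ->] := W_head t2; by [].
move=> [|t2 F2].
  by move=> _ _; rewrite phi_cons; have [s ->] := W_head t1.
rewrite !flabels_cons !cat_uniq => /and3P [u1 d1 uF1] /and3P [u2 d2 uF2].
rewrite !phi_cons => e.
have n1 : lab t1 \notin phi F1.
  rewrite mem_phi; apply/negP => hin; move/negP: d1; apply; apply/hasP.
  by exists (lab t1) => //; apply: lab_in.
have n2 : lab t2 \notin phi F2.
  rewrite mem_phi; apply/negP => hin; move/negP: d2; apply; apply/hasP.
  by exists (lab t2) => //; apply: lab_in.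
have [-> e'] := inj_all u1 u2 n1 n2 e.
by rewrite (IH F2).
Qed.

Lemma decomp (a : nat) m (s : seq nat) : count_mem a s = m -> exists (gs : seq (seq nat)) (r : seq nat),
  [/\ size gs = m, forall g : seq nat, g \in gs -> a \notin g, a \notin r & s = gapw a gs ++ r].
Proof.
elim: m s => [|m IH] s hc.
  exists [::], s; split=> //; by apply/count_memPn.
have ain : a \in s by rewrite -has_pred1 has_count hc.
pose i := index a s.
have hi : i < size s by rewrite index_mem.
have es : s = take i s ++ a :: drop i.+1 s.
  rewrite -{1}(cat_take_drop i s) (drop_nth 0 hi) nth_index //.
have na : a \notin take i s.
  apply/negP => hin; move: (index_cat a (take i s) (a :: drop i.+1 s)).
  rewrite -es hin -/i => e.
  have := index_mem a (take i s); rewrite hin size_take hi -e ltnn.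
  by [].
have : count_mem a (drop i.+1 s) = m.
  move: hc; rewrite {1}es count_cat /= eqxx.
  move/count_memPn: na => ->; rewrite /= add0n add1n; by case.
case/IH => gs [r [sz hg hr e]].
exists (take i s :: gs), r; split => //=.
- by rewrite sz.
- by move=> g; rewrite inE => /orP [/eqP ->|]; [|apply: hg].
- by rewrite {1}es e -catA.
Qed.

Lemma subseq_gapw (a : nat) (gs : seq (seq nat)) g : g \in gs -> subseq g (gapw a gs).
Proof.
elim: gs => //= g' gs IH; rewrite inE => /orP [/eqP ->|h]; first exact: prefix_subseq.
apply: subseq_trans (IH h) _.
apply: subseq_trans (subseq_cons _ a) _; exact: suffix_subseq.
Qed.

Lemma pdisj_of (a : nat) (gs : seq (seq nat)) r : (forall g, g \in gs -> a \notin g) ->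
  (forall y, y != a -> ~~ subseq [:: y; a; y] (gapw a gs ++ r)) -> pdisj (gs ++ [:: r]).
Proof.
elim: gs => [|g gs IH] /= hg hs; first by rewrite andbT; apply/hasP => -[].
have ag : a \notin g by apply: hg; rewrite mem_head.
apply/andP; split.
  apply/hasP => -[y yg]; rewrite flatten_cat /= cats0 => yr.
  have nya : y != a by apply/eqP => e; move: ag; rewrite -e yg.
  move/negP: (hs y nya); apply; rewrite -catA /=.
  rewrite -[[:: y; a; y]]/([:: y] ++ [:: a; y]); apply: cat_subseq; first by rewrite sub1seq.
  rewrite /= eqxx sub1seq mem_cat mem_gapw //; by rewrite -mem_cat.
apply: IH; first by move=> g' g'in; apply: hg; rewrite inE g'in orbT.
move=> y nya; apply/negP => s; move/negP: (hs y nya); apply.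
apply: subseq_trans s _; rewrite -catA /=.
apply: subseq_trans (subseq_cons _ a) _; exact: suffix_subseq.
Qed.

Lemma count_pdisj (ps : seq (seq nat)) p x : pdisj ps -> p \in ps -> x \in p ->
  count_mem x (flatten ps) = count_mem x p.
Proof.
elim: ps => //= q ps IH /andP [d pd]; rewrite inE count_cat => /orP [/eqP ->|pin] xp.
  have : x \notin flatten ps by apply/negP => h; move/negP: d; apply; apply/hasP; exists x.
  by move/count_memPn => ->; rewrite addn0.
have xps : x \in flatten ps by apply/flattenP; exists p.
have : x \notin q by apply/negP => h; move/negP: d; apply; apply/hasP; exists x.
by move/count_memPn => ->; rewrite IH.
Qed.

Lemma choose_list k (gs : seq (seq nat)) :
  (forall g, g \in gs -> exists F, [/\ phi F = g, all (ct_wf k) F & uniq (flabels F)]) ->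
  exists cs, [/\ map phi cs = gs, all (all (ct_wf k)) cs & all uniq (map flabels cs)].
Proof.
elim: gs => [|g gs IH] h; first by exists [::].
have [F [e1 e2 e3]] := h g (mem_head _ _).
have [cs [f1 f2 f3]] : exists cs, [/\ map phi cs = gs, all (all (ct_wf k)) cs & all uniq (map flabels cs)].
  by apply: IH => g' g'in; apply: h; rewrite inE g'in orbT.
by exists (F :: cs); rewrite /= e1 f1 e2 f2 e3 f3.
Qed.

Lemma exist_forest k (hk : 1 <= k) N (w : seq nat) : size w <= N ->
  (forall x, x \in w -> count_mem x w = k) -> abab_free w ->
  exists F, [/\ phi F = w, all (ct_wf k) F & uniq (flabels F)].
Proof.
elim: N w => [|N IH] [|a s] //= hsz hcl hab; try by exists [::].
have ca : count_mem a s = k.-1.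
  by move: (hcl a (mem_head _ _)); rewrite /= eqxx add1n => <-.
have [gs [r [sz hg hr es]]] := decomp ca.
have noyay : forall y, y != a -> ~~ subseq [:: y; a; y] (gapw a gs ++ r).
  move=> y nya; apply/negP => h.
  have nay : a != y by rewrite eq_sym.
  by move/negP: (hab a y nay); apply; rewrite /= eqxx es.
have pd := pdisj_of hg noyay.
have hp : forall p, p \in gs ++ [:: r] -> exists F, [/\ phi F = p, all (ct_wf k) F & uniq (flabels F)].
  move=> p pin.
  have sp : subseq p s.
    move: pin; rewrite mem_cat => /orP [pg|]; rewrite es.
      by apply: subseq_trans (subseq_gapw a pg) _; apply: prefix_subseq.
    by rewrite inE => /eqP ->; apply: suffix_subseq.
  have ap : a \notin p.
    by move: pin; rewrite mem_cat => /orP [/hg //|]; rewrite inE => /eqP ->.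
  apply: IH.
  - by have := size_subseq sp; move: hsz => h1 h2; apply: leq_trans h2 h1.
  - move=> x xp.
    have nxa : x != a by apply/eqP => e; move: ap; rewrite -e xp.
    rewrite -(count_pdisj pd pin xp) -(hcl x); last by rewrite inE (mem_subseq sp) ?orbT.
    rewrite /= eq_sym (negbTE nxa) add0n es count_cat count_gapw flatten_cat count_cat /=.
    by rewrite eq_sym (negbTE nxa) muln0 addn0 cats0.
  - apply: abab_sub hab; apply: subseq_trans sp _; exact: subseq_cons.
have [cs [f1 f2 f3]] : exists cs, [/\ map phi cs = gs, all (all (ct_wf k)) cs & all uniq (map flabels cs)].
  by apply: choose_list => g gin; apply: hp; rewrite mem_cat gin.
have [F' [e1 e2 e3]] : exists F, [/\ phi F = r, all (ct_wf k) F & uniq (flabels F)].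
  by apply: hp; rewrite mem_cat inE eqxx orbT.
exists (CNode a cs :: F'); split.
- by rewrite phi_cons Wnode f1 e1 es.
- by rewrite /= -sz -f1 size_map eqxx f2 e2.
rewrite flabels_cons labnode cat_cons cons_uniq.
have -> : flatten [seq flabels i | i <- cs] ++ flabels F' = flatten (map flabels (cs ++ [:: F'])).
  by rewrite map_cat flatten_cat /= cats0.
rewrite uniq_flatten pdisj_phi -mem_flat_phi !map_cat /= f1 e1 pd andbT all_cat f3 /= e3 andbT.
rewrite flatten_cat /= cats0 mem_cat negb_or hr andbT.
rewrite andbT; apply/negP => /flattenP [g gin ag].
by move: (hg g gin); rewrite ag.
Qed.

Lemma nth_sub (w : seq nat) n i s : n <= i -> i < size w -> subseq s (drop i.+1 w) ->
  subseq (nth 0 w i :: s) (drop n w).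
Proof.
move=> ni iw ss.
rewrite -(cat_take_drop (i - n) (drop n w)) drop_drop subnK // (drop_nth 0 iw).
apply: subseq_trans (suffix_subseq _ _); by rewrite /= eqxx.
Qed.

Lemma sub_nth0 (w : seq nat) x s : subseq (x :: s) w ->
  exists i, [/\ i < size w, nth 0 w i = x & subseq s (drop i.+1 w)].
Proof.
elim: w => //= y w IH; case: eqP => [->|_] h.
  by exists 0; rewrite drop0.
have [i [h1 h2 h3]] := IH h.
by exists i.+1.
Qed.

Lemma sub_nth (w : seq nat) n x s : subseq (x :: s) (drop n w) ->
  exists i, [/\ n <= i, i < size w, nth 0 w i = x & subseq s (drop i.+1 w)].
Proof.
case/sub_nth0 => i [h1 h2 h3]; exists (n + i); split.
- exact: leq_addr.
- by move: h1; rewrite size_drop; lia.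
- by rewrite -nth_drop.
- by move: h3; rewrite drop_drop addnC addnS.
Qed.

Lemma count_flat_nseq k (p : pred nat) (s : seq nat) :
  count p (flatten [seq nseq k i | i <- s]) = k * count p s.
Proof.
elim: s => [|x s IH] /=; first by rewrite muln0.
by rewrite count_cat IH count_nseq mulnDr mulnC.
Qed.

Lemma mem_flat_nseq k (s : seq nat) x : 0 < k ->
  (x \in flatten [seq nseq k i | i <- s]) = (x \in s).
Proof.
move=> hk; elim: s => //= y s IH.
by rewrite mem_cat mem_nseq hk IH inE.
Qed.

Theorem theorem4p2 (k n : nat) (hk : 2 <= k) :
  (forall F, is_ctree k n F -> is_qstirling k n (phi F)) /\
  (forall F1 F2, is_ctree k n F1 -> is_ctree k n F2 -> phi F1 = phi F2 -> F1 = F2) /\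
  (forall w, is_qstirling k n w -> exists F, is_ctree k n F /\ phi F = w).
Proof.
have hk1 : 1 <= k by apply: leq_trans hk.
have uniqF : forall F, is_ctree k n F -> uniq (flabels F).
  by move=> F [_ hp]; rewrite /flabels (perm_uniq hp) iota_uniq.
split; [|split].
- move=> F hF; have uF := uniqF F hF; case: hF => wf hp; split.
    apply/permP => p; rewrite (count_phi hk1) // count_flat_nseq.
    by move/permP: hp => ->.
  move=> [i [j [m [l [[hij hjm hml hl] [e1 [e2 ne]]]]]]].
  have ab := abab_phi wf uF.
  move/negP: (ab (nth 0 (phi F) i) (nth 0 (phi F) j) (introN eqP ne)); apply.
  rewrite -[X in subseq _ X](drop0 (phi F)).
  apply: nth_sub => //; first by lia.
  apply: nth_sub => //; first by lia.
  rewrite e1; apply: nth_sub => //; first by lia.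
  rewrite e2; apply: nth_sub => //.
  exact: sub0seq.
- move=> F1 F2 h1 h2; apply: phi_inj; [exact: uniqF | exact: uniqF].
move=> w [hp hpat].
have memw : forall x, (x \in w) = (x \in iota 1 n).
  by move=> x; rewrite (perm_mem hp) mem_flat_nseq.
have hcl : forall x, x \in w -> count_mem x w = k.
  move=> x xw; move/permP: hp => ->; rewrite count_flat_nseq count_uniq_mem ?iota_uniq //.
  by rewrite -memw xw muln1.
have hab : abab_free w.
  move=> x y nxy; apply/negP => s; apply: hpat.
  rewrite -(drop0 w) in s.
  have [i [_ hi ei s1]] := sub_nth s.
  have [j [hij hj ej s2]] := sub_nth s1.
  have [m [hjm hm em s3]] := sub_nth s2.
  have [l [hml hl el _]] := sub_nth s3.
  exists i, j, m, l; split; first by split; lia.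
  by rewrite ei ej em el; split => //; split => //; apply/eqP.
have [F [e1 e2 e3]] := exist_forest hk1 (leqnn (size w)) hcl hab.
exists F; split => //; split => //.
apply: uniq_perm => //; first exact: iota_uniq.
by move=> x; rewrite -mem_phi e1 memw.
Qed.
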